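(* Let $u$ be a one-sided Sturmian sequence with left special sequence $l=l_1l_2\dots$, and let $xl_1l_2\dots l_{n-1}$ ($x\in\{0,1\}$) be a significant block of $\tilde X_u$. In the HB diagram of $X_u^+$, two arrows leave $xl_1l_2\dots l_{n-1}$ if and only if $xl_1l_2\dots l_{n-1}$ is a right special block, equivalently if and only if $xl_1l_2\dots l_{n-1}=l_nl_{n-1}\dots l_2l_1$.
   Context: A sequence $u\in\{0,1\}^{\mathbb N}$ is Sturmian if for every $n\ge1$ exactly $n+1$ distinct blocks of length $n$ occur in $u$. $X_u^+$ is the closure of $\{\sigma^n u:n\in\mathbb N\}$, $\sigma$ the shift $(\sigma x)_i=x_{i+1}$, and $\tilde X_u=\{x\in\{0,1\}^{\mathbb Z}: x_px_{p+1}\dots\in X_u^+\ \forall p\}$; the languages of $u$, $X_u^+$, $\tilde X_u$ coincide. For each $n$ there is a unique block $L_n$ of length $n$ with $0L_n$ and $1L_n$ in the language; these are the prefixes $L_n=l_1\dots l_n$ of the left special sequence $l$. A block $v$ is right special if both $v0$ and $v1$ are in the language. For a block $a_{-n}\dots a_0$ in the language, $\mathrm{fol}(a_{-n}\dots a_0)=\{b_0b_1\dots\in X_u^+:\exists b\in\tilde X_u,\ b_{-n}\dots b_0=a_{-n}\dots a_0\}$. A block $a_{-n}\dots a_0$ ($n\ge1$) is significant if $\mathrm{fol}(a_{-n}\dots a_0)\subsetneq\mathrm{fol}(a_{-n+1}\dots a_0)$; $0$ and $1$ are also significant. $\mathrm{sig}(\cdot)$ is the longest significant suffix. The HB diagram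 has vertex set the significant blocks and an arrow $\alpha\to\beta$ iff there is a symbol $b$ with $\alpha b$ in the language and $\beta=\mathrm{sig}(\alpha b)$. *)

(* Defs.v *)
From Stdlib Require Import ZArith.
From mathcomp Require Import all_boot.
Set Implicit Arguments. Unset Strict Implicit. Unset Printing Implicit Defensive.

(* One-sided sequences over {0,1} = nat -> bool (false = 0, true = 1);
   two-sided sequences = Z -> bool; blocks = seq bool. *)

Definition in_lang (u : nat -> bool) (w : seq bool) : Prop :=
  exists i : nat, forall j : nat, (j < size w)%N -> u (i + j)%N = nth false w j.

Definition sturmian (u : nat -> bool) : Prop :=
  forall n : nat, (1 <= n)%N ->
    exists s : seq (seq bool), uniq s /\ size s = n.+1 /\
      forall w, (size w = n /\ in_lang u w) <-> w \in s.

(* X_u^+ : closure of the orbit {sigma^m u} in the product topology of {0,1}^N,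
   written out with the cylinder neighbourhood basis. *)
Definition Xplus (u : nat -> bool) (x : nat -> bool) : Prop :=
  forall n : nat, exists m : nat, forall i : nat, (i < n)%N -> u (m + i)%N = x i.

Definition Xtilde (u : nat -> bool) (x : Z -> bool) : Prop :=
  forall p : Z, Xplus u (fun i : nat => x (p + Z.of_nat i)%Z).

Definition fol (u : nat -> bool) (w : seq bool) (y : nat -> bool) : Prop :=
  Xplus u y /\
  exists b : Z -> bool, Xtilde u b /\
    (forall k : nat, (k < size w)%N ->
        b (Z.of_nat k - Z.of_nat (size w).-1)%Z = nth false w k) /\
    (forall i : nat, b (Z.of_nat i) = y i).

Definition significant (u : nat -> bool) (w : seq bool) : Prop :=
  in_lang u w /\
  (size w = 1%N \/
   ((2 <= size w)%N /\
    (forall y, fol u w y -> fol u (behead w) y) /\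
    (exists y, fol u (behead w) y /\ ~ fol u w y))).

Definition is_sig (u : nat -> bool) (w beta : seq bool) : Prop :=
  suffix beta w /\ significant u beta /\
  forall g, suffix g w -> significant u g -> (size g <= size beta)%N.

Definition HB_arrow (u : nat -> bool) (alpha beta : seq bool) : Prop :=
  significant u alpha /\ significant u beta /\
  exists b : bool, in_lang u (rcons alpha b) /\ is_sig u (rcons alpha b) beta.

Definition two_arrows_leave (u : nat -> bool) (alpha : seq bool) : Prop :=
  exists beta1 beta2, beta1 <> beta2 /\
    HB_arrow u alpha beta1 /\ HB_arrow u alpha beta2.

Definition right_special (u : nat -> bool) (v : seq bool) : Prop :=
  in_lang u (rcons v false) /\ in_lang u (rcons v true).

(* l is the left special sequence of u: each prefix L_n = l_1..l_n (l_i = l (i-1))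
   satisfies 0L_n, 1L_n in the language *)
Definition left_special_seq (u : nat -> bool) (l : nat -> bool) : Prop :=
  forall n : nat, in_lang u (false :: mkseq l n) /\ in_lang u (true :: mkseq l n).

(* Main.v *)
Require Import Defs.
From Stdlib Require Import ZArith Classical ClassicalEpsilon.
From mathcomp Require Import all_boot zify.
Set Implicit Arguments. Unset Strict Implicit. Unset Printing Implicit Defensive.

Definition win (y : nat -> bool) i n := mkseq (fun j => y (i + j)) n.

Lemma size_win y i n : size (win y i n) = n.
Proof. exact: size_mkseq. Qed.

Lemma nth_win y i n j : j < n -> nth false (win y i n) j = y (i + j).
Proof. by move=> h; rewrite /win nth_mkseq. Qed.

Lemma win_S y i n : win y i n.+1 = rcons (win y i n) (y (i + n)).
Proof. by rewrite /win mkseqS. Qed.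

Lemma win_cons y i n : win y i n.+1 = y i :: win y i.+1 n.
Proof.
apply: (@eq_from_nth _ false); first by rewrite size_win /= size_win.
rewrite size_win => -[|j] hj; first by rewrite nth_win // addn0.
by rewrite [LHS]nth_win // [RHS]/= nth_win // addSnnS.
Qed.

Lemma in_langP y w : in_lang y w <-> exists i, win y i (size w) = w.
Proof.
split=> [[i hi]|[i hi]]; exists i.
  apply: (@eq_from_nth _ false); first by rewrite size_win.
  by move=> j; rewrite size_win => hj; rewrite nth_win // hi.
by move=> j hj; rewrite -{1}hi nth_win.
Qed.

Lemma win_in_lang y i n : in_lang y (win y i n).
Proof. by apply/in_langP; exists i; rewrite size_win. Qed.

Definition inlb y w : bool :=
  match excluded_middle_informative (in_lang y w) with left _ => true | right _ => false end.

Lemma inlbP y w : reflect (in_lang y w) (inlb y w).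
Proof. by rewrite /inlb; case: excluded_middle_informative => h; constructor. Qed.

Lemma win_add y i n k : win y i (n + k) = win y i n ++ win y (i + n) k.
Proof.
apply: (@eq_from_nth _ false); first by rewrite size_cat !size_win.
move=> j; rewrite size_win => hj; rewrite nth_win // nth_cat size_win.
case: ltnP => h; first by rewrite nth_win.
rewrite nth_win; last by lia.
by congr y; lia.
Qed.

Lemma in_lang_cat y w1 w2 : in_lang y (w1 ++ w2) -> in_lang y w1 /\ in_lang y w2.
Proof.
case/in_langP=> i; rewrite size_cat win_add => /eqP; rewrite eqseq_cat ?size_win //.
case/andP=> /eqP h1 /eqP h2; split; apply/in_langP; [exists i | exists (i + size w1)]; by [].
Qed.

Lemma in_lang_rcons y w b : in_lang y (rcons w b) -> in_lang y w.
Proof. by rewrite -cats1 => /in_lang_cat[]. Qed.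

Lemma in_lang_cons y b w : in_lang y (b :: w) -> in_lang y w.
Proof. by rewrite -cat1s => /in_lang_cat[]. Qed.

Lemma in_lang_ext y w : in_lang y w -> exists b, in_lang y (rcons w b).
Proof.
case/in_langP=> i hi; exists (y (i + size w)); apply/in_langP; exists i.
by rewrite size_rcons win_S hi.
Qed.

Lemma in_lang_nil y : in_lang y [::].
Proof. by exists 0. Qed.

Fixpoint allw n : seq (seq bool) :=
  if n is n'.+1 then [seq rcons z b | z <- allw n', b <- [:: false; true]] else [:: [::]].

Lemma mem_allw n z : (z \in allw n) = (size z == n).
Proof.
elim: n z => [|n IH] z; first by case: z.
apply/allpairsP/idP => [[[z' b] /= [h1 h2 ->]]|].
  by rewrite size_rcons eqSS -IH.
case/lastP: z => [//|z b]; rewrite size_rcons eqSS => hz.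
by exists (z, b); rewrite /= IH hz; case: b.
Qed.

Lemma uniq_allw n : uniq (allw n).
Proof.
elim: n => [//|n IH]; apply: (@allpairs_uniq _ _ _ (fun z (b : bool) => rcons z b)) => //.
by move=> [z1 b1] [z2 b2] _ _ /= /rcons_inj [-> ->].
Qed.

Definition Fw y n := [seq z <- allw n | inlb y z].

Lemma mem_Fw y n z : (z \in Fw y n) = (size z == n) && inlb y z.
Proof. by rewrite mem_filter mem_allw andbC. Qed.

Lemma uniq_Fw y n : uniq (Fw y n).
Proof. exact/filter_uniq/uniq_allw. Qed.

Definition RSb y z := inlb y (rcons z false) && inlb y (rcons z true).

Lemma RSbP y z : reflect (right_special y z) (RSb y z).
Proof. by apply: (iffP andP) => -[/inlbP h1 /inlbP h2]; split => //; apply/inlbP. Qed.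

Lemma count_ext y s :
  count (inlb y) [seq rcons z b | z <- s, b <- [:: false; true]] =
  count (inlb y) s + count (fun z => inlb y z && RSb y z) s.
Proof.
elim: s => [//|z s IH] /=; move: IH => /= ->.
suff E : inlb y (rcons z false) + inlb y (rcons z true) = inlb y z + (inlb y z && RSb y z).
  by move: E; set a := inlb y _; set b := inlb y _; set c := inlb y z; set d := (c && _); lia.
rewrite /RSb; case: (inlbP y z) => hz /=.
  have [b hb] := in_lang_ext hz.
  case: (inlbP y (rcons z false)); case: (inlbP y (rcons z true)) => //= h1 h2.
  by case: b hb => hb; [case: h1|case: h2].
case: (inlbP y (rcons z false)) => [/in_lang_rcons//|_].
by case: (inlbP y (rcons z true)) => [/in_lang_rcons//|_].
Qed.

Lemma size_Fw_S y n : size (Fw y n.+1) = size (Fw y n) + count (RSb y) (Fw y n).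
Proof.
rewrite !size_filter; have -> : allw n.+1 = [seq rcons z b | z <- allw n, b <- [:: false; true]] by [].
rewrite count_ext count_filter; congr (_ + _); apply: eq_count => z; exact: andbC.
Qed.

Lemma size_Fw0 y : size (Fw y 0) = 1.
Proof. by rewrite /Fw /=; case: (inlbP y [::]) => // -[]; apply: in_lang_nil. Qed.

Lemma sturm_size u n : sturmian u -> size (Fw u n) = n.+1.
Proof.
move=> st; case: n => [|n]; first exact: size_Fw0.
have [s [us [ss hs]]] := st n.+1 (erefl _).
rewrite -ss; apply/perm_size/uniq_perm => //; first exact: uniq_Fw.
move=> z; rewrite mem_Fw; apply/andP/idP.
  by case=> /eqP h1 /inlbP h2; apply/hs.
by case/hs => -> h; split => //; apply/inlbP.
Qed.

Lemma count_RS u n : sturmian u -> count (RSb u) (Fw u n) = 1.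
Proof.
move=> st; have := size_Fw_S u n; rewrite !sturm_size //; lia.
Qed.

Lemma RS_unique u z1 z2 : sturmian u -> size z1 = size z2 ->
  right_special u z1 -> right_special u z2 -> z1 = z2.
Proof.
move=> st hs h1 h2; apply/eqP/negPn/negP => hne.
have := count_RS (size z1) st; rewrite -size_filter.
have : 2 <= size [seq z <- Fw u (size z1) | RSb u z]; last by move=> /[swap] ->.
have -> : 2 = size [:: z1; z2] by [].
apply: uniq_leq_size; first by rewrite /= inE hne.
move=> z; rewrite !inE mem_filter mem_Fw => /orP[] /eqP ->.
  by rewrite eqxx (introT (RSbP _ _) h1); apply/inlbP; case: h1 => /in_lang_rcons.
by rewrite hs eqxx (introT (RSbP _ _) h2); apply/inlbP; case: h2 => /in_lang_rcons.
Qed.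

Lemma win_shiftf (u : nat -> bool) K i n : win (fun t => u (K + t)) i n = win u (K + i) n.
Proof. by apply: eq_mkseq => t; rewrite addnA. Qed.

Lemma grow y N : (forall k, k < N -> count (RSb y) (Fw y k) != 0) -> N.+1 <= size (Fw y N).
Proof.
elim: N => [|N IH] h; first by rewrite size_Fw0.
rewrite size_Fw_S; have := IH (fun k hk => h k (ltnW hk)); have := h N (ltnSn _); lia.
Qed.

Lemma periodic_contra u T P : sturmian u -> 0 < P ->
  (forall a, T <= a -> u (a + P) = u a) -> False.
Proof.
move=> st hP hper.
have hperc : forall c a, T <= a -> u (a + c * P) = u a.
  elim=> [|c IH] a ha; first by rewrite mul0n addn0.
  by rewrite mulSn addnA IH ?hper //; lia.
pose n := T + P.
have hsub : {subset Fw u n <= [seq win u q n | q <- iota 0 (T + P)]}.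
  move=> z; rewrite mem_Fw => /andP[/eqP hz /inlbP /in_langP [q]]; rewrite hz => hq.
  apply/mapP; case: (ltnP q (T + P)) => hqT.
    by exists q; rewrite ?mem_iota.
  exists (T + (q - T) %% P); first by rewrite mem_iota add0n ltn_add2l ltn_pmod.
  rewrite -hq; apply: eq_mkseq => x.
  have -> : q + x = (T + (q - T) %% P + x) + ((q - T) %/ P) * P.
    have := divn_eq (q - T) P; lia.
  by rewrite hperc //; lia.
have := uniq_leq_size (uniq_Fw u n) hsub.
by rewrite size_map size_iota sturm_size //; lia.
Qed.

Lemma recurrent u w K : sturmian u -> in_lang u w ->
  exists i, K <= i /\ win u i (size w) = w.
Proof.
move=> st hw; apply: NNPP => H.
have H' : forall i, K <= i -> win u i (size w) <> w by move=> i hi e; apply: H; exists i.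
set N := size w in H'.
case: (posnP N) => hN.
  by apply: (H' K) => //; move: hN; rewrite /N; case: (w) => // _; case: (win _ _ _) (size_win u K 0).
pose u' := fun t => u (K + t).
have hsmall : size (Fw u' N) <= N.
  suff: size (w :: Fw u' N) <= size (Fw u N) by rewrite (sturm_size N st) /=.
  apply: uniq_leq_size.
    rewrite /= uniq_Fw andbT mem_Fw negb_and; apply/orP; right; apply/negP => /inlbP.
    by case/in_langP=> i; rewrite win_shiftf; apply: H'; lia.
  move=> z; rewrite inE => /orP[/eqP ->|]; rewrite mem_Fw.
    by apply/andP; split => //; apply/inlbP.
  rewrite mem_Fw; case/andP=> -> /inlbP /in_langP [i hi]; apply/inlbP.
  by rewrite -hi win_shiftf; apply: win_in_lang.
have [k [hk h0]] : exists k, k < N /\ count (RSb u') (Fw u' k) = 0.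
  apply: NNPP => hn.
  suff : N.+1 <= size (Fw u' N) by rewrite ltnNge hsmall.
  by apply: grow => k hk; apply/eqP => e; apply: hn; exists k.
have det : forall i j, win u' i k = win u' j k -> u' (i + k) = u' (j + k).
  move=> i j e; apply: NNPP => hne.
  have : has (RSb u') (Fw u' k).
    apply/hasP; exists (win u' i k).
      by rewrite mem_Fw size_win eqxx /=; apply/inlbP/win_in_lang.
    have e1 := win_S u' i k; have e2 := win_S u' j k; rewrite -e in e2.
    have hb : forall b, in_lang u' (rcons (win u' i k) b).
      move=> b; case: (b =P u' (i + k)) => [->|nb]; first by rewrite -e1; apply: win_in_lang.
      have -> : b = u' (j + k).
        by move: hne nb; set p := u' (i + k); set q := u' (j + k); case: b; case: p; case: q.
      by rewrite -e2; apply: win_in_lang.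
    by apply/andP; split; apply/inlbP.
  by rewrite has_count h0.
have : ~~ uniq [seq win u' t k | t <- iota 0 k.+2].
  apply/negP => hu.
  suff : size [seq win u' t k | t <- iota 0 k.+2] <= size (Fw u k).
    by rewrite size_map size_iota (sturm_size k st) ltnn.
  apply: (uniq_leq_size hu) => z /mapP [t _ ->]; rewrite mem_Fw size_win eqxx win_shiftf; apply/inlbP/win_in_lang.
case/(uniqPn [::]) => i [j [hij hj]]; rewrite size_map size_iota in hj.
rewrite !(nth_map 0) ?size_iota ?nth_iota //; try lia.
rewrite !add0n => eij.
have prop : forall t, win u' (i + t) k = win u' (j + t) k.
  elim=> [|t IH]; first by rewrite !addn0.
  have hb : forall a, win u' a.+1 k = behead (rcons (win u' a k) (u' (a + k))).
    by move=> a; rewrite -win_S win_cons.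
  by rewrite !addnS !hb (det _ _ IH) IH.
apply: (periodic_contra (T := K + i + k) (P := j - i) st); first lia.
move=> a ha; set d := a - K - k - i.
have := det (i + d) (j + d) (prop d); rewrite /u'.
have -> : K + (i + d + k) = a by rewrite /d; lia.
have -> : K + (j + d + k) = a + (j - i) by rewrite /d; lia.
by move=> ->.
Qed.

Lemma win_step u a m : win u a.+1 m = behead (rcons (win u a m) (u (a + m))).
Proof. by rewrite -win_S win_cons. Qed.

Lemma win_back u a m : win u a m = take m (u a :: win u a.+1 m).
Proof. by rewrite -win_cons win_S -cats1 take_size_cat // size_win. Qed.

Lemma bool_cover (P : bool -> Prop) b1 b2 : b1 <> b2 -> P b1 -> P b2 -> forall b, P b.
Proof. by case: b1; case: b2 => // _ h1 h2 []. Qed.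

Lemma RS_of_letters u x y m : win u x m = win u y m -> u (x + m) <> u (y + m) ->
  right_special u (win u x m).
Proof.
move=> e ne.
have h : forall b, in_lang u (rcons (win u x m) b).
  apply: (bool_cover ne); first by rewrite -win_S; apply: win_in_lang.
  by rewrite e -win_S; apply: win_in_lang.
by split.
Qed.

Lemma LS_of_letters u x y m : win u x.+1 m = win u y.+1 m -> u x <> u y ->
  forall b, in_lang u (b :: win u x.+1 m).
Proof.
move=> e ne; apply: (bool_cover ne); first by rewrite -win_cons; apply: win_in_lang.
by rewrite e -win_cons; apply: win_in_lang.
Qed.

Lemma prop_win u v x y D : sturmian u -> right_special u v ->
  win u x (size v) = win u y (size v) ->
  (forall d, d < D -> win u (x + d) (size v) <> v) ->
  forall d, d <= D -> win u (x + d) (size v) = win u (y + d) (size v).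
Proof.
move=> st rv e nv; elim=> [|d IH] hd; first by rewrite !addn0.
have IH' := IH (ltnW hd).
have el : u (x + d + size v) = u (y + d + size v).
  apply: NNPP => ne; apply: (nv d hd); apply: (RS_unique st) => //; first by rewrite size_win.
  exact: RS_of_letters IH' ne.
by rewrite !addnS !win_step IH' el.
Qed.

Definition isret u v i p := 0 < p /\ win u (i + p) (size v) = v /\
  forall q, 0 < q < p -> win u (i + q) (size v) <> v.

Lemma ret_ex u v i : sturmian u -> in_lang u v -> exists p, isret u v i p.
Proof.
move=> st hv.
have ex : exists p, (0 < p) && (win u (i + p) (size v) == v).
  have [j [hj e]] := recurrent i.+1 st hv.
  by exists (j - i); rewrite subnKC ?e ?eqxx //; lia.
case: (ex_minnP ex) => p /andP[hp /eqP e] hmin; exists p; split => //; split => //.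
move=> q /andP[q0 qp] eq; have := hmin q; rewrite q0 eq eqxx => /(_ erefl); lia.
Qed.

Lemma ret_same u v i j p : sturmian u -> right_special u v ->
  win u i (size v) = v -> win u j (size v) = v -> u (i + size v) = u (j + size v) ->
  isret u v i p ->
  isret u v j p /\ forall t, t <= p -> win u (i + t) (size v) = win u (j + t) (size v).
Proof.
move=> st rv hi hj el [p0 [hp hmin]].
have e1 : win u i.+1 (size v) = win u j.+1 (size v) by rewrite !win_step hi hj el.
have P := prop_win (D := p.-1) st rv e1.
have hw : forall t, t <= p -> win u (i + t) (size v) = win u (j + t) (size v).
  case=> [|t] ht; first by rewrite !addn0 hi hj.
  have := P _ t; rewrite -!addSnnS; apply; last lia.
  by move=> d hd; rewrite addSnnS; apply: hmin; lia.
split=> //; split=> //; split; first by rewrite -hw.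
move=> q hq; rewrite -hw; [exact: hmin | lia].
Qed.

Lemma dist_ret u v i p : sturmian u -> right_special u v ->
  win u i (size v) = v -> isret u v i p ->
  forall s t, s < t < p -> win u (i + s) (size v) <> win u (i + t) (size v).
Proof.
move=> st rv hi [p0 [hp hmin]] s t /andP[st' tp] e.
case: (posnP s) => s0.
  by move: e; rewrite s0 addn0 hi => e; apply: (hmin t) => //; lia.
have P := prop_win (D := p - t) st rv e.
have := P _ (p - t) (leqnn _); rewrite -!addnA subnKC ?(ltnW tp) // hp => e2.
apply: (hmin (s + (p - t))); first lia.
by rewrite e2 // => d hd; rewrite -addnA; apply: hmin; lia.
Qed.

Lemma behead_rcons_all (a : bool) v : v = behead (rcons v a) -> all (pred1 a) v.
Proof.
elim: v => [//|x v IH] /=.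
case: v IH => [|y v] IH /=; first by case=> ->; rewrite eqxx.
case=> exy e; rewrite exy.
by have /= /andP[-> ->] := IH e.
Qed.

Lemma KL u v a : sturmian u -> rev v = v -> right_special u v ->
  (forall z, size z = size v -> in_lang u (false :: z) -> in_lang u (true :: z) -> z = v) ->
  in_lang u (a :: v) -> in_lang u (~~ a :: v) -> ~ in_lang u (~~ a :: rcons v a) -> False.
Proof.
move=> st pal rv hLS hav hnav hno.
set m := size v.
have hv : in_lang u v by case: rv => /in_lang_rcons.
have occ_c : forall c, exists i, win u i m = v /\ u (i + m) = c.
  move=> c; have : in_lang u (rcons v c) by case: rv; case: c.
  by case/in_langP => i; rewrite size_rcons win_S => /rcons_inj [e1 e2]; exists i.
have K1 : forall i p, win u i m = v -> u (i + m) = ~~ a -> isret u v i p ->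
    u (i + p - 1) = ~~ a.
  move=> i p hi hc hr; have [p0 [hp hmin]] := hr.
  case: (posnP m) => m0.
    have p1 : p = 1.
      apply/eqP; rewrite eqn_leq p0 andbT; apply: contraT; rewrite -ltnNge => h.
      exfalso; apply: (hmin 1); first by rewrite h.
      apply: (@eq_from_nth _ false); first by rewrite size_win.
      by move=> k; rewrite size_win; move: m0; rewrite /m => ->.
    by rewrite p1 addn1 subn1 /= -hc m0 addn0.
  case: (leqP p m) => hpm.
    have e1 : u (i + p - 1) = nth false v (p - 1).
      by rewrite -hi nth_win; [congr u; lia | lia].
    have e2 : u (i + m) = nth false v (m - p).
      by rewrite -hp nth_win; [congr u; lia | lia].
    rewrite e1 -hc e2 -{1}pal nth_rev -/m; [congr nth; lia | lia].
  have [ia [hia hca]] := occ_c a.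
  have [pa hra] := ret_ex ia st hv.
  have pa1 : pa = 1.
    have [pa0 [hpa hmina]] := hra.
    apply/eqP; rewrite eqn_leq pa0 andbT; apply: contraT; rewrite -ltnNge => pa2.
    pose L := [seq win u (i + t) m | t <- iota 0 m.+1] ++ [:: win u (ia + 1) m].
    have uL : uniq L.
      suff [u1 n1] : uniq [seq win u (i + t) m | t <- iota 0 m.+1] /\
          win u (ia + 1) m \notin [seq win u (i + t) m | t <- iota 0 m.+1].
        by rewrite cat_uniq u1 has_seq1 n1.
      split.
        rewrite map_inj_in_uniq ?iota_uniq // => t1 t2; rewrite !mem_iota !add0n => h1 h2 e.
        case: (ltngtP t1 t2) => // h.
          by exfalso; apply: (dist_ret st rv hi hr (s:=t1) (t:=t2)) => //; lia.
        by exfalso; apply: (dist_ret st rv hi hr (s:=t2) (t:=t1)) => //; lia.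
      apply/mapP => -[t]; rewrite mem_iota add0n => ht e.
      case: (posnP t) => t0.
        by move: e; rewrite t0 addn0 hi => e; apply: (hmina 1); [lia | rewrite e].
      have eb : u ia = u (i + t - 1).
        apply: NNPP => ne.
        have e' : win u ia.+1 m = win u (i + t - 1).+1 m.
          by rewrite -addn1 e; congr win; lia.
        have h := LS_of_letters e' ne.
        apply: (hmina 1); first lia.
        by rewrite addn1; apply: hLS; rewrite ?size_win //; apply: h.
      have : win u ia m = win u (i + t - 1) m.
        rewrite (win_back u ia) (win_back u (i + t - 1)) eb.
        have -> : (i + t - 1).+1 = i + t by lia.
        by rewrite -e addn1.
      rewrite hia => e3.
      have t1 : t = 1.
        apply: NNPP => t1; apply: (hmin (t - 1)); first lia.
        have -> : i + (t - 1) = i + t - 1 by lia.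
        by rewrite [RHS]e3.
      move: e; rewrite t1 => e.
      have : nth false (win u (ia + 1) m) m.-1 = nth false (win u (i + 1) m) m.-1 by rewrite e.
      rewrite !nth_win; try lia.
      have -> : ia + 1 + m.-1 = ia + m by lia.
      have -> : i + 1 + m.-1 = i + m by lia.
      by rewrite hca hc; case: (a).
    have : size L <= size (Fw u m).
      apply: (uniq_leq_size uL) => z; rewrite mem_cat => /orP[/mapP[t _ ->]|].
        by rewrite mem_Fw size_win eqxx; apply/inlbP/win_in_lang.
      by rewrite inE => /eqP ->; rewrite mem_Fw size_win eqxx; apply/inlbP/win_in_lang.
    by rewrite size_cat size_map size_iota (sturm_size m st) /=; lia.
  have va : v = nseq m a.
    have [_ [hpa _]] := hra; move: hpa; rewrite pa1 addn1 win_step hia hca => e.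
    by apply/all_pred1P; apply: behead_rcons_all; rewrite e.
  apply: NNPP => hx.
  have hxa : u (i + p - 1) = a by move: hx; case: (u _); case: (a).
  apply: (hmin (p - 1)); first lia.
  rewrite (win_back u (i + (p - 1))).
  have -> : (i + (p - 1)).+1 = i + p by lia.
  have -> : i + (p - 1) = i + p - 1 by lia.
  rewrite hxa hp.
  transitivity (take m (nseq m.+1 a)); first by rewrite [in LHS]va size_nseq.
  by rewrite take_nseq // -va.
have [j0 hj0] : exists j0, win u j0 m.+1 = ~~ a :: v.
  by case/in_langP: hnav => j0; exists j0.
have [oj0 cj0] : win u j0.+1 m = v /\ u j0 = ~~ a by move: hj0; rewrite win_cons => -[-> ->].
have [ia' [hia' hca']] := occ_c (~~ a).
have [pa' hra'] := ret_ex ia' st hv.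
have Q : forall j, j0 < j -> win u j m = v -> u (j - 1) = ~~ a.
  elim/ltn_ind => j IH hj hocc.
  case: (eqVneq j j0.+1) => [->|ne]; first by rewrite subn1.
  have ex : exists k, (j0 < k < j) && (win u k m == v).
    by exists j0.+1; rewrite ltnSn oj0 eqxx andbT /=; move: ne hj; lia.
  have ub : forall k, (j0 < k < j) && (win u k m == v) -> k <= j.
    by move=> k /andP[/andP[_ /ltnW ->]].
  case: (ex_maxnP ex ub) => j1 /andP[/andP[h1 h2] /eqP h3] hmax.
  have hb := IH j1 h2 h1 h3.
  have hc : u (j1 + m) = ~~ a.
    apply: NNPP => hn; apply: hno.
    have e : u (j1 + m) = a by move: hn; case: (u _); case: (a).
    apply/in_langP; exists (j1 - 1).
    rewrite /= size_rcons win_cons.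
    have -> : (j1 - 1).+1 = j1 by lia.
    by rewrite win_S h3 e hb.
  have [hrj1 _] := ret_same st rv hia' h3 (etrans hca' (esym hc)) hra'.
  have [p0 [hp hmin]] := hrj1.
  have le : j1 + pa' <= j.
    rewrite leqNgt; apply/negP => hlt.
    by apply: (hmin (j - j1)); [lia | rewrite subnKC //; lia].
  have eqj : j1 + pa' = j.
    apply/eqP; rewrite eqn_leq le /=; rewrite leqNgt; apply/negP => hlt.
    have := hmax (j1 + pa'); rewrite hp eqxx andbT hlt andbT.
    have -> : j0 < j1 + pa' by lia.
    by move=> /(_ erefl); lia.
  by rewrite -eqj; apply: K1.
have [K [hK eK]] := recurrent j0.+1 st hav.
move: eK; rewrite /= win_cons => -[eK1 eK2].
have hK' : j0 < K.+1 by lia.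
have := Q K.+1 hK' eK2.
by rewrite subn1 /= eK1; case: (a).
Qed.

Lemma left_ext u w : sturmian u -> in_lang u w -> exists b, in_lang u (b :: w).
Proof.
move=> st hw; have [i [hi e]] := recurrent 1 st hw.
exists (u (i - 1)); apply/in_langP; exists (i - 1); rewrite /= win_cons.
have -> : (i - 1).+1 = i by lia.
by rewrite e.
Qed.

Lemma neg_bool (a b : bool) : a <> b -> b = ~~ a.
Proof. by case: a; case: b. Qed.

Lemma rev_closed u : sturmian u -> forall w, in_lang u w -> in_lang u (rev w).
Proof.
move=> st.
suff H : forall n w, size w <= n -> in_lang u w -> in_lang u (rev w).
  by move=> w; apply: (H (size w)).
elim=> [|n IH] w hs hw; first by move: hs; rewrite leqn0 => /nilP ->; apply: in_lang_nil.
case: (leqP (size w) n) => hsn; first exact: IH.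
case: w hs hw hsn => [//|a w'] hs hw hsn.
case/lastP: w' hs hw hsn => [|v b] hs hw hsn; first by [].
rewrite /= size_rcons in hs hsn.
apply: NNPP => hno.
have hrw : rev (a :: rcons v b) = b :: rcons (rev v) a by rewrite rev_cons rev_rcons.
rewrite hrw in hno.
have h1 : in_lang u (a :: v) by move: hw; rewrite -rcons_cons => /in_lang_rcons.
have h2 : in_lang u (rcons v b) by move: hw => /in_lang_cons.
have IHr : forall z, size z <= n -> in_lang u z -> in_lang u (rev z) := IH.
have r1 : in_lang u (rcons (rev v) a) by rewrite -rev_cons; apply: IHr => //=; lia.
have r2 : in_lang u (b :: rev v) by rewrite -rev_rcons; apply: IHr => //; rewrite size_rcons; lia.
have [c hc] := in_lang_ext r2.
have hca : c = ~~ a.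
  by apply: neg_bool => e; apply: hno; rewrite e.
rewrite hca /= in hc.
have [d hd] := left_ext st r1.
have hdb : d = ~~ b by apply: neg_bool => e; apply: hno; rewrite e.
rewrite hdb in hd.
have rsv : right_special u v.
  have h3 : in_lang u (rcons v (~~ b)).
    rewrite -[v]revK -rev_cons; apply: IHr; first by rewrite /= size_rev; lia.
    by move: hd; rewrite -rcons_cons => /in_lang_rcons.
  by case: (b) h2 h3 => h2 h3; split.
have rsrv : right_special u (rev v).
  have h4 : in_lang u (rcons (rev v) (~~ a)) by move: hc => /in_lang_cons.
  by case: (a) r1 h4 => r1 h4; split.
have pal : rev v = v by apply: (RS_unique st) => //; rewrite size_rev.
rewrite pal in hno hc hd r1.
case: (eqVneq a b) => [eab|nab].
  by apply: hno; move: hw; rewrite -eab.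
have hb : b = ~~ a by apply: neg_bool => e; rewrite e eqxx in nab.
rewrite hb in hno hc hd.
apply: (KL st pal rsv _ h1 _ hno).
  move=> z hz h5 h6.
  have rz : right_special u (rev z).
    split; rewrite -rev_cons; apply: IHr => //=; lia.
  have : rev z = v by apply: (RS_unique st) => //; rewrite size_rev.
  by move=> e; rewrite -[z]revK e pal.
by move: hc; rewrite -rcons_cons => /in_lang_rcons.
Qed.

Definition sigb u g : bool :=
  match excluded_middle_informative (significant u g) with left _ => true | right _ => false end.

Lemma sigbP u g : reflect (significant u g) (sigb u g).
Proof. by rewrite /sigb; case: excluded_middle_informative => h; constructor. Qed.

Lemma in_lang_drop u w k : in_lang u w -> in_lang u (drop k w).
Proof. by rewrite -{1}(cat_take_drop k w) => /in_lang_cat[]. Qed.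

Lemma suffix_drop (w g : seq bool) : suffix g w -> g = drop (size w - size g) w.
Proof.
case/suffixP => s ->; rewrite size_cat addnK drop_size_cat //.
Qed.

Lemma sig_exists u w : in_lang u w -> 0 < size w -> exists beta, is_sig u w beta.
Proof.
move=> hw hs.
pose P k := (k <= size w) && sigb u (drop (size w - k) w).
have ex : exists k, P k.
  exists 1; rewrite /P hs /=; apply/sigbP; split; first exact: in_lang_drop.
  by left; rewrite size_drop; lia.
have ub : forall k, P k -> k <= size w by move=> k /andP[].
case: (ex_maxnP ex ub) => k /andP[hk /sigbP hsig] hmax.
exists (drop (size w - k) w); split; last split => //.
  by apply/suffixP; exists (take (size w - k) w); rewrite cat_take_drop.
move=> g hg hsg; rewrite size_drop.
have := hmax (size g); rewrite /P -(suffix_drop hg).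
have -> : size g <= size w by case/suffixP: hg => s ->; rewrite size_cat leq_addl.
have : sigb u g by apply/sigbP.
move=> -> /(_ erefl); lia.
Qed.

Lemma is_sig_unique u w b1 b2 : is_sig u w b1 -> is_sig u w b2 -> b1 = b2.
Proof.
move=> [s1 [g1 m1]] [s2 [g2 m2]].
have := m1 _ s2 g2; have := m2 _ s1 g1 => h1 h2.
by rewrite (suffix_drop s1) (suffix_drop s2); congr drop; congr subn; apply/eqP; rewrite eqn_leq h1 h2.
Qed.

Lemma sig_size u g : significant u g -> 0 < size g.
Proof. by case=> _ [->|[h _]] //; lia. Qed.

Lemma two_arrows_iff u alpha : significant u alpha ->
  (two_arrows_leave u alpha <-> right_special u alpha).
Proof.
move=> sa; split.
  move=> [b1 [b2 [ne [[_ [_ [c1 [hc1 hs1]]]] [_ [_ [c2 [hc2 hs2]]]]]]]].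
  have nc : c1 <> c2 by move=> e; apply: ne; apply: (is_sig_unique hs1); rewrite e.
  have h : forall c, in_lang u (rcons alpha c) by apply: (bool_cover nc).
  by split.
move=> [r0 r1].
have sz : forall c, 0 < size (rcons alpha c) by move=> c; rewrite size_rcons.
have [b0 hb0] := sig_exists r0 (sz false).
have [b1 hb1] := sig_exists r1 (sz true).
have lastb : forall c b, is_sig u (rcons alpha c) b -> last true b = c.
  move=> c b [hsu [hsg _]]; have := sig_size hsg; case/suffixP: hsu => s e.
  have := congr1 (last true) e; rewrite last_rcons last_cat.
  by case: b hsg e => //= y b' _ _ ->.
exists b0, b1; split.
  by move=> e; have := lastb _ _ hb0; rewrite e (lastb _ _ hb1).
split; split => //; split.
- by case: hb0 => _ [].
- by exists false.
- by case: hb1 => _ [].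
- by exists true.
Qed.

Theorem lemma4p10 (u l : nat -> bool) (x : bool) (n : nat) :
  sturmian u -> left_special_seq u l -> (1 <= n)%N ->
  significant u (x :: mkseq l n.-1) ->
  (two_arrows_leave u (x :: mkseq l n.-1) <-> right_special u (x :: mkseq l n.-1)) /\
  (right_special u (x :: mkseq l n.-1) <-> x :: mkseq l n.-1 = rev (mkseq l n)).
Proof.
move=> st ls hn sig.
have rsL : right_special u (rev (mkseq l n)).
  have h : forall c, in_lang u (rcons (rev (mkseq l n)) c).
    by move=> c; rewrite -rev_cons; apply: (rev_closed st); case: (ls n); case: c.
  by split.
split; first exact: two_arrows_iff.
split; last by move=> ->.
move=> rs; apply: (RS_unique st) => //.
by rewrite size_rev /= !size_mkseq; lia.
Qed.
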